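(* Under the standing assumptions, let $\vec v$ be a demand vector with at least four non-zero entries. Then there exists a task $t$ of type 2 with respect to $\vec v$ such that $\vec v$ has at least four non-empty tasks distinct from $t$. Moreover, for any such task $t$, letting $i$ be the intermediate task of $t$ with respect to $\vec v$ and letting $\vec v'$ be the demand vector such that $(\vec v,\vec v')$ is $(i,t)$-adjacent, the task $t$ is of type 2 with intermediate task $i$ with respect to $\vec v'$.
   Context: Standing assumptions: $n\ge 4$, $k\ge 5$, and $f_1,\dots,f_n$ are functions from demand vectors to $[k]$ satisfying the demand (for every demand vector $\vec v$ and task $j$, exactly $v_j$ agents $a$ have $f_a(\vec v)=j$), with maximum switching cost at most $2$. A demand vector is $\vec v=(v_1,\dots,v_k)$ of non-negative integers with $\sum v_j=n$; task $j$ is non-empty in $\vec v$ if $v_j\ge1$. The switching cost of $(\vec v,\vec v')$ is the number of agents $a$ with $f_a(\vec v)\ne f_a(\vec v')$; $\vec v,\vec v'$ are adjacent if $\|\vec v-\vec v'\|_1=2$. An ordered pair $(\vec v_1,\vec v_2)$ is $(s,t)$-adjacent if $s\ne t$ and $\vec v_2$ is obtained from $\vec v_1$ by moving one unit of demand from task $s$ to task $t$. Agent $a$ is $(i,j)$-mobile with respect to $(\vec v_1,\vec v_2)$ if $f_a(\vec v_1)=i$, $f_a(\vec v_2)=j$, $i\ne j$. If $(\vec v_1,\vec v_2)$ is $(s,t)$-adjacent with switching cost $2$, then there is a task $i\notin\{s,t\}$ such that one switching agent is $(s,i)$-mobile and the other is $(i,t)$-mobile; $i$ is called the intermediate task of $(\vec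 v_1,\vec v_2)$. A task $t$ is of type 1 with respect to $\vec v$ if for every task $s\ne t$ non-empty in $\vec v$, the $(s,t)$-adjacent pair starting at $\vec v$ has switching cost $1$. A task $t$ is of type 2 with respect to $\vec v$ if there exist a task $i$ and an agent $a$ such that for every task $s\notin\{i,t\}$ non-empty in $\vec v$, the $(s,t)$-adjacent pair starting at $\vec v$ has switching cost $2$, intermediate task $i$, and $(i,t)$-mobile agent $a$; then $i$ is the intermediate task of $t$ with respect to $\vec v$. *)

(* Defs.v *)
From mathcomp Require Import all_boot.
Set Implicit Arguments. Unset Strict Implicit. Unset Printing Implicit Defensive.

(* An assignment is f : 'I_n -> {ffun 'I_k -> nat} -> 'I_k
   (f a v = task of agent a under demand v); only its values on demand
   vectors matter. *)

Definition dvec (k : nat) := {ffun 'I_k -> nat}.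

Definition is_demand (n k : nat) (v : dvec k) : Prop := \sum_(j < k) v j = n.

Definition nonempty (k : nat) (v : dvec k) (j : 'I_k) : bool := 0 < v j.

Section Defs.
Variables (n k : nat).
Implicit Types (v : dvec k) (f : 'I_n -> dvec k -> 'I_k).

Definition satisfies_demand f : Prop :=
  forall v, is_demand n v -> forall j : 'I_k, #|[set a | f a v == j]| = v j.

Definition switching_cost f v v' : nat := #|[set a | f a v != f a v']|.

Definition l1dist v v' : nat := \sum_(j < k) ((v j - v' j) + (v' j - v j)).

Definition adjacent v v' : Prop := l1dist v v' = 2.

Definition max_switching_cost_le f (c : nat) : Prop :=
  forall v v', is_demand n v -> is_demand n v' -> adjacent v v' ->
    switching_cost f v v' <= c.

Definition move v (s t : 'I_k) : dvec k :=
  [ffun j => if j == s then (v j).-1 else if j == t then (v j).+1 else v j].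

Definition st_adjacent v1 v2 (s t : 'I_k) : Prop :=
  s != t /\ 0 < v1 s /\ v2 = move v1 s t.

Definition mobile f (a : 'I_n) v1 v2 (i j : 'I_k) : Prop :=
  f a v1 = i /\ f a v2 = j /\ i != j.

(* For an (s,t)-adjacent pair of switching cost 2: i is its intermediate
   task and a is its (i,t)-mobile agent. *)
Definition intermediate_with f v1 v2 (s t i : 'I_k) (a : 'I_n) : Prop :=
  switching_cost f v1 v2 = 2 /\ i != s /\ i != t /\
  (exists b : 'I_n, mobile f b v1 v2 s i) /\ mobile f a v1 v2 i t.

Definition type1 f v (t : 'I_k) : Prop :=
  forall s : 'I_k, s != t -> nonempty v s -> switching_cost f v (move v s t) = 1.

Definition type2_with f v (t i : 'I_k) : Prop :=
  exists a : 'I_n, forall s : 'I_k, s != i -> s != t -> nonempty v s ->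
    intermediate_with f v (move v s t) s t i a.

Definition type2 f v (t : 'I_k) : Prop := exists i : 'I_k, type2_with f v t i.

Definition num_nonempty_except v (t : 'I_k) : nat :=
  #|[set s | (s != t) && nonempty v s]|.

End Defs.

(* Main.v *)
Require Import Defs.
From mathcomp Require Import all_boot zify.
From Stdlib Require Import Classical.
Set Implicit Arguments. Unset Strict Implicit. Unset Printing Implicit Defensive.

Section Vec.
Variable k : nat.
Implicit Types (v : dvec k) (s t : 'I_k).

Lemma moveE v s t j : move v s t j =
  if j == s then (v j).-1 else if j == t then (v j).+1 else v j.
Proof. by rewrite ffunE. Qed.

Lemma move_demand n v s t : is_demand n v -> s <> t -> 0 < v s -> is_demand n (move v s t).
Proof.
rewrite /is_demand => hv hst hs; rewrite -hv.
rewrite (bigD1 s) //= (bigD1 t) //=; last by apply/eqP => E; apply: hst.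
rewrite [in RHS](bigD1 s) //= [in RHS](bigD1 t) //=; last by apply/eqP => E; apply: hst.
rewrite !moveE eqxx.
have -> : (t == s) = false by apply/eqP => E; apply: hst.
rewrite eqxx.
rewrite (eq_bigr (fun j => v j)). 2:{ move=> j /andP[hj1 hj2]; rewrite moveE (negbTE hj1) (negbTE hj2) //. }
set S1 := (X in _ + (_ + X) = _); set S2 := (X in _ = _ + (_ + X)).
have -> : S1 = S2 by []. lia.
Qed.

Lemma move_adj v s t : s <> t -> 0 < v s -> adjacent v (move v s t).
Proof.
move=> hst hs; rewrite /adjacent /l1dist.
rewrite (bigD1 s) //= (bigD1 t) //=; last by apply/eqP => E; apply: hst.
rewrite !moveE eqxx.
have -> : (t == s) = false by apply/eqP => E; apply: hst.
rewrite eqxx big1; first by lia.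
move=> j /andP[hj1 hj2]; rewrite moveE (negbTE hj1) (negbTE hj2); lia.
Qed.

End Vec.

Ltac brute := repeat (rewrite ?eqxx /=; match goal with |- context [?a == ?b] => case: (a =P b) => [?|?]; try subst end); try lia; try congruence; try (split; congruence).


Lemma multi2a (T:eqType) (s t x y x' y' : T) : s <> t -> x <> y -> x' <> y' -> x = s ->
 (forall j, (j==t) + (x==j) + (x'==j) = (j==s) + (y==j) + (y'==j)) ->
 (y = x' /\ y' = t).
Proof.
move=> hst hxy hxy' hx H; subst x.
move: (H y) (H x') (H t).
brute.
Qed.

Lemma multi2 (T:eqType) (s t x y x' y' : T) : s <> t -> x <> y -> x' <> y' ->
 (forall j, (j==t) + (x==j) + (x'==j) = (j==s) + (y==j) + (y'==j)) ->
 (x = s /\ y = x' /\ y' = t) \/ (x' = s /\ y' = x /\ y = t).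
Proof.
move=> hst hxy hxy' H.
have := H s; rewrite eqxx; case: (s =P t) => // _.
case: (x =P s) => [hx|hx] /=.
  by left; split => //; apply: multi2a H.
case: (x' =P s) => [hx'|hx'] /=; last by lia.
right; split => //; apply: (multi2a hst hxy' hxy hx') => j.
by rewrite -(addnAC _ (x == j)) H addnAC.
Qed.

Section Main.
Variables (n k : nat) (f : 'I_n -> dvec k -> 'I_k).
Hypothesis hdem : satisfies_demand f.
Hypothesis hcost : max_switching_cost_le f 2.

Lemma cnt X Y j : is_demand n X -> is_demand n Y ->
  Y j + \sum_(a in [set a | f a X != f a Y]) (f a X == j)
  = X j + \sum_(a in [set a | f a X != f a Y]) (f a Y == j).
Proof.
move=> hX hY; rewrite -(hdem hX j) -(hdem hY j).
have cE V : #|[set a | f a V == j]| = \sum_a (f a V == j).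
  by rewrite -sum1_card big_mkcond /=; apply: eq_bigr => a _; rewrite inE; case: eqP.
rewrite !cE (bigID (fun a => a \in [set a | f a X != f a Y])) /=.
rewrite [in RHS](bigID (fun a => a \in [set a | f a X != f a Y])) /=.
have -> : \sum_(i | i \notin [set a | f a X != f a Y]) (f i Y == j) =
          \sum_(i | i \notin [set a | f a X != f a Y]) (f i X == j).
  by apply: eq_bigr => a; rewrite inE negbK => /eqP ->.
by rewrite [LHS]addnAC [RHS]addnAC; congr (_ + _); rewrite addnC.
Qed.


Definition C1 X Y (s t : 'I_k) (c : 'I_n) :=
  f c X = s /\ f c Y = t /\ forall x, x <> c -> f x Y = f x X.
Definition C2 X Y (s t j : 'I_k) (d g : 'I_n) :=
  f d X = s /\ f d Y = j /\ f g X = j /\ f g Y = t /\ j <> s /\ j <> t /\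
  forall x, x <> d /\ x <> g -> f x Y = f x X.

Lemma neqF (T : eqType) (a b : T) : a <> b -> (a == b) = false.
Proof. by move/eqP/negbTE. Qed.

Lemma edge X s t : is_demand n X -> s <> t -> 0 < X s ->
  (exists c, C1 X (move X s t) s t c) \/ (exists j d g, C2 X (move X s t) s t j d g).
Proof.
move=> hX hst hs.
set Y := move X s t.
have hY : is_demand n Y by apply: move_demand.
have hc : switching_cost f X Y <= 2 by apply: hcost => //; apply: move_adj.
set D := [set a | f a X != f a Y].
have key j : (j == t) + \sum_(a in D) (f a X == j) = (j == s) + \sum_(a in D) (f a Y == j).
  have := cnt j hX hY; rewrite [Y j]moveE -/D.
  case: (j =P s) => [->|hjs]; first by rewrite /= (neqF hst); lia.
  case: (j =P t) => [->|hjt]; first by rewrite /=; lia.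
  by lia.
have hts : t <> s by move=> E; apply: hst.
move: hc; rewrite /switching_cost -/D leq_eqVlt ltnS leq_eqVlt ltnS leqn0.
case/or3P.
-
  case/cards2P => d [e [hde hD]].
  have hdD : d \in D by rewrite hD !inE eqxx.
  have heD : e \in D by rewrite hD !inE eqxx orbT.
  move: (hdD) (heD); rewrite !inE => /eqP hd /eqP he.
  have hoth x : x <> d /\ x <> e -> f x Y = f x X.
    move=> [h1 h2]; case: (boolP (f x X == f x Y)) => [/eqP -> //|hx]; exfalso.
    have : x \in D by rewrite inE.
    by rewrite hD !inE => /orP[] /eqP.
  have hsum F : \sum_(a in D) (F a : nat) = F d + F e.
    rewrite hD big_setU1 ?big_set1 //= inE; exact: hde.
  have kk j : (j == t) + (f d X == j) + (f e X == j) = (j == s) + (f d Y == j) + (f e Y == j).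
    by have := key j; rewrite !hsum !addnA.
  have hde' : d <> e by apply/eqP.
  right; case: (multi2 hst hd he kk) => [[h1 [h2 h3]]|[h1 [h2 h3]]].
  + exists (f e X), d, e; do !split => //; try congruence.
  + exists (f d X), e, d; do !split => //; try congruence.
    by move=> x [? ?]; apply: hoth.
-
  case/cards1P => d hD.
  have hdD : d \in D by rewrite hD !inE eqxx.
  move: (hdD); rewrite !inE => /eqP hd.
  have hoth x : x <> d -> f x Y = f x X.
    move=> h1; case: (boolP (f x X == f x Y)) => [/eqP -> //|hx]; exfalso.
    have : x \in D by rewrite inE.
    by rewrite hD !inE => /eqP.
  have hsum F : \sum_(a in D) (F a : nat) = F d by rewrite hD big_set1.
  have k1 := key s; have k2 := key t; rewrite !hsum eqxx in k1 k2.
  rewrite (neqF hst) in k1; rewrite (neqF hts) in k2.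
  left; exists d; split; last split; last exact: hoth.
  + by move: k1 k2; brute.
  + by move: k1 k2; brute.
-
  rewrite cards_eq0 => /eqP hD.
  have := key s; rewrite hD !big_set0 eqxx neqF //.
Qed.

Lemma cost_sym X Y : switching_cost f X Y = switching_cost f Y X.
Proof. by apply: eq_card => a; rewrite !inE eq_sym. Qed.

Lemma costmv X s t : is_demand n X -> s <> t -> 0 < X s -> switching_cost f X (move X s t) <= 2.
Proof. by move=> hX hst hs; apply: hcost => //; [apply: move_demand | apply: move_adj]. Qed.

Lemma d3 X Y a b c : switching_cost f X Y <= 2 -> a <> b -> a <> c -> b <> c ->
  f a X <> f a Y -> f b X <> f b Y -> f c X <> f c Y -> False.
Proof.
move=> hc hab hac hbc ha hb hcc.
have h3 : #|(a |: (b |: [set c]))| = 3.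
  rewrite !cardsU1 cards1 !inE.
  have -> : (a == b) = false by apply/eqP.
  have -> : (a == c) = false by apply/eqP.
  by have -> : (b == c) = false by apply/eqP.
have : #|(a |: (b |: [set c]))| <= switching_cost f X Y.
  apply: subset_leq_card; apply/subsetP => x; rewrite !inE.
  by case/or3P => /eqP ->; apply/eqP.
by rewrite h3 => /leq_trans /(_ hc).
Qed.

End Main.

Definition Done {A B : Type} (a : A) (b : B) := True.

Ltac sat1 := match goal with
 | H : forall y : 'I_?m, _ , x : 'I_?m |- _ =>
   lazymatch goal with | _ : Done H x |- _ => fail | _ => idtac end;
   let e := fresh "e" in
   first [ have e := H x ltac:(split; congruence) | have e := H x ltac:(congruence) ltac:(congruence) | have e := H x ltac:(congruence) ];
   have : Done H x by []; move=> ?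
 end.
Ltac sat := repeat sat1.

Ltac vec := apply/ffunP => ?; rewrite !ffunE; repeat (match goal with |- context [?a == ?b] => case: (a =P b) => [?|?]; try subst end); try lia; try congruence.

Ltac d3t hc a b c := sat; exfalso; apply: (d3 (a:=a) (b:=b) (c:=c) hc); congruence.

Section Main2.
Variables (n k : nat) (f : 'I_n -> dvec k -> 'I_k).
Hypothesis hdem : satisfies_demand f.
Hypothesis hcost : max_switching_cost_le f 2.
Local Notation C1 := (C1 f).
Local Notation C2 := (C2 f).

Lemma V1 (X : dvec k) s s' t : s <> s' -> s <> t -> s' <> t -> 0 < X s ->
  move (move X s t) s' s = move X s' t.
Proof. move=> *; vec. Qed.

Lemma V2 (X : dvec k) a b c d : a <> b -> a <> c -> a <> d -> b <> c -> b <> d -> c <> d ->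
  move (move X a b) c d = move (move X c d) a b /\ move (move X a b) c d = move (move X a d) c b.
Proof. move=> *; split; vec. Qed.

Lemma pw1 X s s' t c j d g : is_demand n X -> s <> s' -> s <> t -> s' <> t -> 0 < X s -> 0 < X s' ->
  C1 X (move X s t) s t c -> C2 X (move X s' t) s' t j d g -> j = s.
Proof.
move=> hX h1 h2 h3 hs hs' [? [? ?]] [? [? [? [? [? [? ?]]]]]].
have hc : switching_cost f (move X s t) (move X s' t) <= 2.
  rewrite -(V1 h1 h2 h3 hs); apply: costmv => //; [exact: move_demand | congruence |].
  by rewrite moveE (neqF (nesym h1)) (neqF h3).
case: (j =P s) => // hjs; exfalso.
sat.
apply: (d3 (a:=c) (b:=d) (c:=g) hc); congruence.
Qed.

Lemma adjc X s s' t : is_demand n X -> s <> s' -> s <> t -> s' <> t -> 0 < X s -> 0 < X s' ->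
  switching_cost f (move X s t) (move X s' t) <= 2.
Proof.
move=> hX h1 h2 h3 hs hs'.
rewrite -(V1 h1 h2 h3 hs); apply: costmv => //; [exact: move_demand | congruence |].
by rewrite moveE (neqF (nesym h1)) (neqF h3).
Qed.

Lemma pw2 X s s' t j d g j' d' g' : is_demand n X -> s <> s' -> s <> t -> s' <> t -> 0 < X s -> 0 < X s' ->
  C2 X (move X s t) s t j d g -> C2 X (move X s' t) s' t j' d' g' ->
  (j = j' /\ g = g') \/ (j = s' /\ j' = s).
Proof.
move=> hX h1 h2 h3 hs hs' [? [? [? [? [? [? ?]]]]]] [? [? [? [? [? [? ?]]]]]].
have hc := adjc hX h1 h2 h3 hs hs'.
case: (j =P j') => hjj'.
  case: (g =P g') => hgg'; first by left.
  subst j'; d3t hc d d' g.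
case: (j =P s') => hjs'; case: (j' =P s) => hj's; first by right.
- case: (d' =P g) => hd'g; [subst d'; d3t hc d g' g | d3t hc d g' d'].
- case: (d =P g') => hdg'; [subst d; d3t hc d' g g' | d3t hc d' g d].
- d3t hc d d' g.
Qed.

Definition T2 (X : dvec k) (t i : 'I_k) (a : 'I_n) := forall s, s <> i -> s <> t -> 0 < X s ->
  exists d, C2 X (move X s t) s t i d a.

Lemma t2_of_c2 X t s0 j d g : is_demand n X -> s0 <> t -> 0 < X s0 ->
  C2 X (move X s0 t) s0 t j d g -> T2 X t j g.
Proof.
move=> hX hs0t hs0 H0 s hsj hst hs.
case: (s =P s0) => [->|hss0]; first by exists d.
case: (edge hdem hcost hX hst hs) => [[c hc] | [j' [d' [g' hc]]]].
  by exfalso; apply: hsj; rewrite -(pw1 hX hss0 hst hs0t hs hs0 hc H0).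
case: (pw2 hX (nesym hss0) hs0t hst hs0 hs H0 hc) => [[E1 E2]|[E1 E2]].
  by subst; exists d'.
by exfalso; apply: hsj.
Qed.

Lemma sq1 w s1 s2 T1 T2 x11 x12 x21 x22 : is_demand n w ->
  s1 <> s2 -> T1 <> T2 -> s1 <> T1 -> s1 <> T2 -> s2 <> T1 -> s2 <> T2 ->
  0 < w s1 -> 0 < w s2 ->
  C1 w (move w s1 T1) s1 T1 x11 -> C1 w (move w s1 T2) s1 T2 x12 ->
  C1 w (move w s2 T1) s2 T1 x21 -> C1 w (move w s2 T2) s2 T2 x22 ->
  x11 = x12 /\ x21 = x22 /\
  ((f x11 (move (move w s1 T1) s2 T2) = T1 /\ f x21 (move (move w s1 T1) s2 T2) = T2) \/
   (f x11 (move (move w s1 T1) s2 T2) = T2 /\ f x21 (move (move w s1 T1) s2 T2) = T1)) /\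
  forall x, x <> x11 -> x <> x21 -> f x (move (move w s1 T1) s2 T2) = f x w.
Proof.
move=> hw h12 hT h11 h12' h21 h22 hs1 hs2 [? [? ?]] [? [? ?]] [? [? ?]] [? [? ?]].
set Z := move (move w s1 T1) s2 T2.
have hN11 : is_demand n (move w s1 T1) by apply: move_demand.
have hN12 : is_demand n (move w s1 T2) by apply: move_demand.
have hN21 : is_demand n (move w s2 T1) by apply: move_demand.
have hN22 : is_demand n (move w s2 T2) by apply: move_demand.
have [EA EB] := V2 w h11 h12 h12' (nesym h21) hT h22.
have [EC ED] := V2 w h22 (nesym h12) h21 (nesym h12') (nesym hT) h11.
have c12 : switching_cost f (move w s1 T2) Z <= 2.
  rewrite /Z EB; apply: costmv => //; rewrite moveE (neqF (nesym h12)) (neqF h22) //.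
have c22 : switching_cost f (move w s2 T2) Z <= 2.
  rewrite /Z EA; apply: costmv => //; rewrite moveE (neqF h12) (neqF h12') //.
have c21 : switching_cost f (move w s2 T1) Z <= 2.
  rewrite /Z EA ED; apply: costmv => //; rewrite moveE (neqF h12) (neqF h11) //.
have hs2' : 0 < move w s1 T1 s2 by rewrite moveE (neqF (nesym h12)) (neqF h21).
rewrite /Z in c12 c22 c21 *.
case: (edge hdem hcost hN11 h22 hs2') => [[y [? [? ?]]] | [j [d [g [? [? [? [? [? [? ?]]]]]]]]]].
- case: (x21 =P y) => hy; last by d3t c21 x11 y x21.
  subst y.
  case: (x22 =P x21) => h2; last by d3t c22 x11 x21 x22.
  case: (x12 =P x11) => h1; last by d3t c12 x21 x11 x12.
  subst; do 2 split => //; split; first by sat; left; split; congruence.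
  by move=> x ? ?; sat; congruence.
- case: (j =P T1) => hj.
  + subst j; case: (g =P x11) => hg.
    * subst g.
      case: (x22 =P d) => h2; last by d3t c22 x11 d x22.
      case: (x21 =P d) => h3; last by d3t c21 x11 d x21.
      case: (x12 =P x11) => h1; last by d3t c12 d x11 x12.
      subst; do 2 split => //; split; first by sat; right; split; congruence.
      by move=> x ? ?; sat; congruence.
    * case: (d =P x21) => hd; last by d3t c21 x11 g d.
      subst d; case: (x22 =P x21) => h5; [subst x22; d3t c22 x11 x21 g | d3t c22 x11 x21 g].
  + case: (d =P x21) => hd; [subst d; d3t c21 x11 g x21 | d3t c21 x11 g d].
Qed.

Lemma sq2 w s1 s2 T1 T2 j x1 x2 d1 d2 g : is_demand n w ->
  s1 <> s2 -> T1 <> T2 -> s1 <> T1 -> s1 <> T2 -> s2 <> T1 -> s2 <> T2 -> j <> T1 ->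
  0 < w s1 -> 0 < w s2 ->
  C1 w (move w s1 T1) s1 T1 x1 -> C1 w (move w s2 T1) s2 T1 x2 ->
  C2 w (move w s1 T2) s1 T2 j d1 g -> C2 w (move w s2 T2) s2 T2 j d2 g -> False.
Proof.
move=> hw h12 hT h11 h12' h21 h22 hjT hs1 hs2 [? [? ?]] [? [? ?]]
  [? [? [? [? [? [? ?]]]]]] [? [? [? [? [? [? ?]]]]]].
have hN11 : is_demand n (move w s1 T1) by apply: move_demand.
have hN12 : is_demand n (move w s1 T2) by apply: move_demand.
have hN21 : is_demand n (move w s2 T1) by apply: move_demand.
have hN22 : is_demand n (move w s2 T2) by apply: move_demand.
have [EA EB] := V2 w h11 h12 h12' (nesym h21) hT h22.
have [EC ED] := V2 w h22 (nesym h12) h21 (nesym h12') (nesym hT) h11.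
set Z := move (move w s1 T1) s2 T2.
have c12 : switching_cost f (move w s1 T2) Z <= 2.
  rewrite /Z EB; apply: costmv => //; rewrite moveE (neqF (nesym h12)) (neqF h22) //.
have c22 : switching_cost f (move w s2 T2) Z <= 2.
  rewrite /Z EA; apply: costmv => //; rewrite moveE (neqF h12) (neqF h12') //.
have c21 : switching_cost f (move w s2 T1) Z <= 2.
  rewrite /Z EA ED; apply: costmv => //; rewrite moveE (neqF h12) (neqF h11) //.
have hs2' : 0 < move w s1 T1 s2 by rewrite moveE (neqF (nesym h12)) (neqF h21).
rewrite /Z in c12 c22 c21.
case: (edge hdem hcost hN11 h22 hs2') => [[y [? [? ?]]] | [j' [d' [g' [? [? [? [? [? [? ?]]]]]]]]]].
- case: (x1 =P d1) => h; [subst d1; d3t c12 x1 g y | d3t c12 x1 g y].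
- case: (g' =P x1) => hg.
  + subst g'; case: (d' =P d2) => h; [subst d'; d3t c22 x1 g d2 | d3t c22 x1 g d'].
  + case: (j' =P T1) => hj'.
    2:{ case: (d' =P x2) => h; [subst d'; d3t c21 x1 g' x2 | d3t c21 x1 g' d']. }
    case: (d' =P x2) => hd'; last by d3t c21 x1 g' d'.
    subst j' d'.
    case: (x1 =P d1) => h; [subst d1; d3t c12 x2 x1 g | d3t c12 x2 x1 g].
Qed.

Lemma anti w T1 T2 p q xp1 xp2 xq1 xq2 : is_demand n w ->
  p <> q -> T1 <> T2 -> p <> T1 -> p <> T2 -> q <> T1 -> q <> T2 -> 0 < w p -> 0 < w q ->
  C1 w (move w p T1) p T1 xp1 -> C1 w (move w p T2) p T2 xp2 ->
  C1 w (move w q T1) q T1 xq1 -> C1 w (move w q T2) q T2 xq2 ->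
  (f xp1 (move (move w p T1) q T2) == T1) = ~~ (f xq1 (move (move w q T1) p T2) == T1).
Proof.
move=> hw h1 h2 h3 h4 h5 h6 hp hq H1 H2 H3 H4.
have [E1 _] := V2 w h3 h1 h4 (nesym h5) h2 h6.
have [_ E2] := V2 w h6 (nesym h1) h5 (nesym h4) (nesym h2) h3.
rewrite [in RHS](_ : move (move w q T1) p T2 = move (move w p T1) q T2); last by rewrite E1 E2.
case: (sq1 hw h1 h2 h3 h4 h5 h6 hp hq H1 H2 H3 H4) => _ [_ [H _]].
case: H => [[-> ->]|[-> ->]].
  by rewrite eqxx (neqF (nesym h2)).
by rewrite eqxx (neqF (nesym h2)).
Qed.

Lemma cons3 w T1 T2 p q r xp1 xp2 xq1 xq2 xr1 xr2 : is_demand n w ->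
  p <> q -> p <> r -> q <> r -> T1 <> T2 -> p <> T1 -> p <> T2 -> q <> T1 -> q <> T2 ->
  r <> T1 -> r <> T2 -> 0 < w p -> 0 < w q -> 0 < w r ->
  C1 w (move w p T1) p T1 xp1 -> C1 w (move w p T2) p T2 xp2 ->
  C1 w (move w q T1) q T1 xq1 -> C1 w (move w q T2) q T2 xq2 ->
  C1 w (move w r T1) r T1 xr1 -> C1 w (move w r T2) r T2 xr2 ->
  (f xp1 (move (move w p T1) q T2) == T1) = (f xp1 (move (move w p T1) r T2) == T1).
Proof.
move=> hw hpq hpr hqr hT h1 h2 h3 h4 h5 h6 hp hq hr Hp1 Hp2 Hq1 Hq2 Hr1 Hr2.
have [_ [_ [A1 A2]]] := sq1 hw hpq hT h1 h2 h3 h4 hp hq Hp1 Hp2 Hq1 Hq2.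
have [_ [_ [B1 B2]]] := sq1 hw hpr hT h1 h2 h5 h6 hp hr Hp1 Hp2 Hr1 Hr2.
have hc : switching_cost f (move (move w p T1) q T2) (move (move w p T1) r T2) <= 2.
  rewrite -(V1 (X:=move w p T1) hqr h4 h6).
    have hd1 : is_demand n (move w p T1) by apply: move_demand.
    have hd2 : is_demand n (move (move w p T1) q T2).
      by apply: move_demand => //; rewrite moveE (neqF (nesym hpq)) (neqF h3).
    apply: costmv => //; first by apply: nesym.
    by rewrite !moveE (neqF (nesym hqr)) (neqF h6) (neqF (nesym hpr)) (neqF h5).
  by rewrite moveE (neqF (nesym hpq)) (neqF h3).
move: Hp1 Hq1 Hr1 => [? [? ?]] [? [? ?]] [? [? ?]].
case: A1 => [[e1 e2]|[e1 e2]]; case: B1 => [[e3 e4]|[e3 e4]].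
- by rewrite e1 e3.
- exfalso; d3t hc xp1 xq1 xr1.
- exfalso; d3t hc xp1 xq1 xr1.
- by rewrite e1 e3.
Qed.

Lemma tour w T1 T2 (R : {set 'I_k}) : is_demand n w -> T1 <> T2 -> 2 < #|R| ->
  (forall r, r \in R -> r <> T1 /\ r <> T2 /\ 0 < w r) ->
  (forall r, r \in R -> exists c, C1 w (move w r T1) r T1 c) ->
  (forall r, r \in R -> exists c, C1 w (move w r T2) r T2 c) -> False.
Proof.
move=> hw hT /card_gt2P [a [b [c [[ha hb hc] [/eqP hab /eqP hbc /eqP hca]]]]] hR H1 H2.
have [? [? ?]] := hR a ha; have [? [? ?]] := hR b hb; have [? [? ?]] := hR c hc.
have [xa1 Ha1] := H1 a ha; have [xa2 Ha2] := H2 a ha.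
have [xb1 Hb1] := H1 b hb; have [xb2 Hb2] := H2 b hb.
have [xc1 Hc1] := H1 c hc; have [xc2 Hc2] := H2 c hc.
have K1 := cons3 hw hab (nesym hca) hbc hT ltac:(done) ltac:(done) ltac:(done) ltac:(done) ltac:(done) ltac:(done)
  ltac:(done) ltac:(done) ltac:(done) Ha1 Ha2 Hb1 Hb2 Hc1 Hc2.
have K2 := cons3 hw (nesym hab) hbc (nesym hca) hT ltac:(done) ltac:(done) ltac:(done) ltac:(done) ltac:(done) ltac:(done)
  ltac:(done) ltac:(done) ltac:(done) Hb1 Hb2 Ha1 Ha2 Hc1 Hc2.
have K3 := cons3 hw hca (nesym hbc) hab hT ltac:(done) ltac:(done) ltac:(done) ltac:(done) ltac:(done) ltac:(done)
  ltac:(done) ltac:(done) ltac:(done) Hc1 Hc2 Ha1 Ha2 Hb1 Hb2.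
have A1 := anti hw hab hT ltac:(done) ltac:(done) ltac:(done) ltac:(done) ltac:(done) ltac:(done) Ha1 Ha2 Hb1 Hb2.
have A2 := anti hw (nesym hca) hT ltac:(done) ltac:(done) ltac:(done) ltac:(done) ltac:(done) ltac:(done) Ha1 Ha2 Hc1 Hc2.
have A3 := anti hw hbc hT ltac:(done) ltac:(done) ltac:(done) ltac:(done) ltac:(done) ltac:(done) Hb1 Hb2 Hc1 Hc2.
move: K1 K2 K3 A1 A2 A3.
set o1 := (f xa1 _ == T1); set o2 := (f xa1 _ == T1); set o3 := (f xb1 _ == T1);
  set o4 := (f xb1 _ == T1); set o5 := (f xc1 _ == T1); set o6 := (f xc1 _ == T1).
by case: o1; case: o2; case: o3; case: o4; case: o5; case: o6.
Qed.

Lemma pos_of X a j : is_demand n X -> f a X = j -> 0 < X j.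
Proof.
move=> hX ha; rewrite -(hdem hX j); apply/card_gt0P; exists a; rewrite inE ha.
exact: eqxx.
Qed.

Lemma c2_cost X Y s t j d g : C2 X Y s t j d g -> switching_cost f X Y = 2.
Proof.
move=> [h1 [h2 [h3 [h4 [h5 [h6 h7]]]]]].
have hdg : d != g by apply/eqP => E; apply: h5; congruence.
rewrite /switching_cost; have -> : [set a | f a X != f a Y] = d |: [set g].
  apply/setP => x; rewrite !inE.
  case: (x =P d) => [->|hxd]; first by rewrite h1 h2; apply/eqP => E; apply: h5.
  case: (x =P g) => [->|hxg]; first by rewrite h3 h4; apply/eqP.
  by rewrite h7 // eqxx.
by rewrite cardsU1 cards1 inE hdg.
Qed.

Lemma inter_c2 X Y s t i a : intermediate_with f X Y s t i a -> exists d, C2 X Y s t i d a.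
Proof.
move=> [hc [/eqP his [/eqP hit [[b [hb1 [hb2 /eqP hb3]]] [ha1 [ha2 /eqP ha3]]]]]].
exists b; do 6 (split; first by congruence).
move=> x [hxb hxa]; case: (f x Y =P f x X) => // hne; exfalso.
have hc2 : switching_cost f X Y <= 2 by rewrite hc.
apply: (d3 (a:=b) (b:=a) (c:=x) hc2); congruence.
Qed.

Lemma t2_type2 X t i a : T2 X t i a -> type2_with f X t i.
Proof.
move=> H; exists a => s /eqP hsi /eqP hst hs.
have [d hC] := H s hsi hst hs.
have hcost2 := c2_cost hC.
move: hC => [h1 [h2 [h3 [h4 [h5 [h6 h7]]]]]].
split; first exact: hcost2. do 2 (split; first by apply/eqP).
split; first by exists d; do 2 (split => //); apply/eqP => E; apply: h5.
by do 2 (split => //); apply/eqP.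
Qed.

Lemma dich X t : is_demand n X -> (exists i a, T2 X t i a) \/
  (forall s, s <> t -> 0 < X s -> exists c, C1 X (move X s t) s t c).
Proof.
move=> hX.
case: (classic (exists s, s <> t /\ 0 < X s /\ exists j d g, C2 X (move X s t) s t j d g)).
  move=> [s [hst [hs [j [d [g H]]]]]]; left; exists j, g; exact: t2_of_c2 H.
move=> hn; right => s hst hs.
case: (edge hdem hcost hX hst hs) => // [[j [d [g H]]]].
by exfalso; apply: hn; exists s; split => //; split => //; exists j, d, g.
Qed.

End Main2.

Lemma cardD1ge (T : finType) (A : {set T}) x : #|A| <= #|A :\ x| + 1.
Proof. by rewrite (cardsD1 x A); case: (x \in A) => /=; lia. Qed.

Section Main3.
Variables (n k : nat) (f : 'I_n -> dvec k -> 'I_k).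
Hypothesis hdem : satisfies_demand f.
Hypothesis hcost : max_switching_cost_le f 2.
Local Notation C1 := (C1 f).
Local Notation C2 := (C2 f).
Local Notation T2 := (T2 f).

Lemma part2 X t i : is_demand n X -> 4 <= num_nonempty_except X t ->
  type2_with f X t i -> type2_with f (move X i t) t i.
Proof.
move=> hX hnum [a Ha].
set S := [set s | (s != t) && nonempty X s].
have hS' : 2 < #|S :\ i| by have := cardD1ge S i; rewrite /num_nonempty_except -/S in hnum; lia.
have HC : forall s, s \in S :\ i -> s <> i /\ s <> t /\ 0 < X s /\
    exists b, C2 X (move X s t) s t i b a.
  move=> s; rewrite !inE => /andP[hsi /andP[hst hs]].
  split; first by apply/eqP. split; first by apply/eqP. split; first exact: hs.
  exact: inter_c2 (Ha s hsi hst hs).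
case/card_gt2P: (hS') => s1 [s2 [s3 [[h1 h2 h3] [/eqP h12 /eqP h23 /eqP h31]]]].
have [hs1i [hs1t [hs1p [b1 Cs1]]]] := HC s1 h1.
have [hs2i [hs2t [hs2p [b2 Cs2]]]] := HC s2 h2.
have hit : i <> t by case: Cs1 => [? [? [? [? [? [? ?]]]]]].
have hai : f a X = i by case: Cs1 => [? [? [? [? [? [? ?]]]]]].
have hip : 0 < X i := pos_of hdem hX hai.
have hv : is_demand n (move X i t) by apply: move_demand.
have hvp s : s <> i -> s <> t -> (move X i t) s = X s.
  by move=> h h'; rewrite moveE (neqF h) (neqF h').
have cost_p s : s <> i -> s <> t -> 0 < X s -> switching_cost f (move X i t) (move X s t) <= 2.
  move=> h h' hs; rewrite -(V1 (nesym h) hit h' hip); apply: costmv => //; rewrite hvp //.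
have hc1 := cost_p s1 hs1i hs1t hs1p.
have hc2 := cost_p s2 hs2i hs2t hs2p.
have CB : C1 X (move X i t) i t a.
  case: (edge hdem hcost hX hit hip) => [[c Hc]|[j [e [g Hc]]]].
  - case: (c =P a) => [E|hca]; first by subst c.
    move: Hc Cs1 => [? [? ?]] [? [? [? [? [? [? ?]]]]]].
    d3t hc1 c a b1.
  - exfalso.
    move: Hc Cs1 Cs2 => [? [? [? [? [? [? ?]]]]]] [? [? [? [? [? [? ?]]]]]] [? [? [? [? [? [? ?]]]]]].
    case: (e =P a) => hea.
      subst e; case: (g =P b1) => hg1.
        subst g; d3t hc2 a b2 b1.
      d3t hc1 a b1 g.
    case: (b1 =P g) => hb1g; [subst b1; d3t hc1 a g e | d3t hc1 a b1 e].
have CV s b : s <> i -> s <> t -> 0 < X s -> C2 X (move X s t) s t i b a ->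
    C1 (move X i t) (move (move X i t) s i) s i b.
  move=> h h' hs; rewrite (V1 (nesym h) hit h' hip).
  move: CB => [? [? ?]] [? [? [? [? [? [? ?]]]]]].
  split; first by sat; congruence.
  split => // x hx; case: (x =P a) => [->|hxa]; first by congruence.
  by sat; congruence.
case: (classic (exists s, s \in S :\ i /\ exists j d g, C2 (move X i t) (move (move X i t) s t) s t j d g)).
- move=> [s0 [hs0 [j [d [g H0]]]]].
  have [hs0i [hs0t [hs0p _]]] := HC s0 hs0.
  have HT : T2 (move X i t) t j g by apply: (t2_of_c2 hdem hcost hv hs0t _ H0); rewrite hvp.
  case: (j =P i) => [E|hji]; first by subst j; exact: t2_type2 HT.
  exfalso.
  have : 1 < #|S :\ i :\ j| by have := cardD1ge (S :\ i) j; lia.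
  case/card_gt1P => r1 [r2 [hr1 hr2 /eqP hr12]].
  move: hr1 hr2 => /setD1P[/eqP hr1j hr1] /setD1P[/eqP hr2j hr2].
  have [hr1i [hr1t [hr1p [c1 Cr1]]]] := HC r1 hr1.
  have [hr2i [hr2t [hr2p [c2 Cr2]]]] := HC r2 hr2.
  have [d1 D1] := HT r1 hr1j hr1t ltac:(by rewrite hvp).
  have [d2 D2] := HT r2 hr2j hr2t ltac:(by rewrite hvp).
  apply: (sq2 hdem hcost hv hr12 hit hr1i hr1t hr2i hr2t hji _ _
            (CV _ _ hr1i hr1t hr1p Cr1) (CV _ _ hr2i hr2t hr2p Cr2) D1 D2); by rewrite hvp.
- move=> hn; exfalso.
  apply: (tour hdem hcost hv hit hS').
  + move=> r hr; have [? [? [? _]]] := HC r hr; do 2 (split => //); by rewrite hvp.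
  + move=> r hr; have [hri [hrt [hrp [b Cr]]]] := HC r hr; exists b; exact: CV.
  + move=> r hr; have [hri [hrt [hrp _]]] := HC r hr.
    case: (edge hdem hcost hv hrt ltac:(by rewrite hvp)) => // [[j [d [g H]]]].
    by exfalso; apply: hn; exists r; split => //; exists j, d, g.
Qed.

Lemma part1 X : is_demand n X -> 5 <= k -> 4 <= #|[set j | nonempty X j]| ->
  exists t, type2 f X t /\ 4 <= num_nonempty_except X t.
Proof.
move=> hX hk hN.
set N := [set j | nonempty X j]. rewrite -/N in hN.
have hNE t : #|N :\ t| <= num_nonempty_except X t.
  apply: subset_leq_card; apply/subsetP => x; rewrite !inE => /andP[-> ->] //.
have inN x : (x \in N) = (0 < X x) by rewrite inE.
case: (classic (exists t0, X t0 = 0)) => [[t0 ht0]|hall].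
- have hne0 : num_nonempty_except X t0 = #|N|.
    apply: eq_card => x; rewrite !inE /nonempty.
    by case: (x =P t0) => [->|] //=; rewrite ht0.
  case: (dich hdem hcost t0 hX) => [[i [a HT]]|hC0].
    by exists t0; split; [exists i; exact: t2_type2 HT | rewrite hne0].
  exfalso.
  have [t' ht'] : exists t', t' \in N by apply/card_gt0P; lia.
  have ht'p : 0 < X t' by rewrite -inN.
  have ht't0 : t' <> t0 by move=> E; move: ht'p; rewrite E ht0.
  have hN' : 2 < #|N :\ t'| by have := cardD1ge N t'; lia.
  case: (dich hdem hcost t' hX) => [[i [a HT]]|hC'].
  + have : 1 < #|N :\ t' :\ i| by have := cardD1ge (N :\ t') i; lia.
    case/card_gt1P => r1 [r2 [hr1 hr2 /eqP hr12]].
    move: hr1 hr2 => /setD1P[/eqP hr1i /setD1P[/eqP hr1t hr1]] /setD1P[/eqP hr2i /setD1P[/eqP hr2t hr2]].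
    rewrite inN in hr1; rewrite inN in hr2.
    have [d1 D1] := HT r1 hr1i hr1t hr1.
    have [d2 D2] := HT r2 hr2i hr2t hr2.
    have hip : 0 < X i by apply: (pos_of hdem hX (a:=a)); case: D1 => [? [? [? ?]]].
    have hit0 : i <> t0 by move=> E; move: hip; rewrite E ht0.
    have hr1t0 : r1 <> t0 by move=> E; move: hr1; rewrite E ht0.
    have hr2t0 : r2 <> t0 by move=> E; move: hr2; rewrite E ht0.
    have [x1 C11] := hC0 r1 hr1t0 hr1.
    have [x2 C12] := hC0 r2 hr2t0 hr2.
    exact: (sq2 hdem hcost hX hr12 (nesym ht't0) hr1t0 hr1t hr2t0 hr2t hit0 hr1 hr2 C11 C12 D1 D2).
  + apply: (tour hdem hcost hX (nesym ht't0) hN').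
    * move=> r /setD1P[/eqP hrt hr]; rewrite inN in hr.
      by split => //; move=> E; move: hr; rewrite E ht0.
    * move=> r /setD1P[/eqP hrt hr]; rewrite inN in hr; apply: hC0 => //.
      by move=> E; move: hr; rewrite E ht0.
    * move=> r /setD1P[/eqP hrt hr]; rewrite inN in hr; exact: hC' .
- have hpos j : 0 < X j by case: (X j =P 0) => [E|/eqP]; [exfalso; apply: hall; exists j | lia].
  have hNk : #|N| = k.
    have -> : N = setT by apply/setP => x; rewrite inN hpos inE.
    by rewrite cardsT card_ord.
  have h0 : 0 < k by lia.
  have h1 : 1 < k by lia.
  pose t := Ordinal h0; pose t' := Ordinal h1.
  have htt' : t <> t' by [].
  have num4 u : 4 <= num_nonempty_except X u by have := hNE u; have := cardD1ge N u; lia.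
  case: (dich hdem hcost t hX) => [[i [a HT]]|hC].
    by exists t; split; [exists i; exact: t2_type2 HT | apply: num4].
  case: (dich hdem hcost t' hX) => [[i [a HT]]|hC'].
    by exists t'; split; [exists i; exact: t2_type2 HT | apply: num4].
  exfalso.
  have hR : 2 < #|N :\ t' :\ t|.
    by have := cardD1ge (N :\ t') t; have := cardD1ge N t'; lia.
  apply: (tour hdem hcost hX htt' hR).
  + move=> r /setD1P[/eqP hrt /setD1P[/eqP hrt' _]]; by split.
  + move=> r /setD1P[/eqP hrt /setD1P[/eqP hrt' _]]; exact: hC.
  + move=> r /setD1P[/eqP hrt /setD1P[/eqP hrt' _]]; exact: hC'.
Qed.

End Main3.

Theorem lemma4p8 (n k : nat) (f : 'I_n -> dvec k -> 'I_k) :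
  4 <= n -> 5 <= k ->
  satisfies_demand f -> max_switching_cost_le f 2 ->
  forall v : dvec k, is_demand n v ->
  4 <= #|[set j | nonempty v j]| ->
  (exists t : 'I_k, type2 f v t /\ 4 <= num_nonempty_except v t) /\
  (forall t i : 'I_k, 4 <= num_nonempty_except v t ->
     type2_with f v t i ->
     type2_with f (move v i t) t i).
Proof.
move=> hn hk hdem hcost v hv hN; split.
  exact: part1.
move=> t i; exact: part2.
Qed.
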